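(* Let $n\ge2$ and let $\chi_{n-1}$ be the irreducible character of the symmetric group $S_n$ of dimension $n-1$ such that the character of the standard $n$-dimensional permutation representation of $S_n$ equals $1+\chi_{n-1}$. Then for every $g\in S_n$, $$c(g)\le\frac1n\Big(1+\frac{\chi_{n-1}(g)}{(n-1)^2}\Big),$$ and $$c(S_n)\le\frac{1}{n-1}.$$
   Context: For a finite group $G$ and $g\in G$, $c(g)=|\{(x,y)\in G\times G:[x,y]=g\}|/|G|^2$, and $c(G)=c(1)$. *)

(* Defs.v *)
From mathcomp Require Import all_boot all_order all_algebra all_fingroup all_solvable all_field all_character.
Set Implicit Arguments. Unset Strict Implicit. Unset Printing Implicit Defensive.
Import GRing.Theory Num.Theory.
Local Open Scope ring_scope.

(* c_G(g) = |{(x,y) in G x G : [x,y] = g}| / |G|^2, valued in algC.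
   Commutator convention [~ x, y] = x^-1 * y^-1 * x * y (MathComp's). *)
Definition comm_prob (gT : finGroupType) (G : {group gT}) (g : gT) : algC :=
  (#|[set xy : gT * gT | [&& xy.1 \in G, xy.2 \in G & ([~ xy.1, xy.2]%g == g)]]|%:R)
  / ((#|G| ^ 2)%N)%:R.

Definition comm_prob_grp (gT : finGroupType) (G : {group gT}) : algC :=
  comm_prob G 1%g.

Definition perm_char (n : nat) (g : 'S_n) : algC := #|[set i : 'I_n | g i == i]|%:R.

(* Main.v *)
Require Import Defs.
From mathcomp Require Import all_boot all_order all_algebra all_fingroup all_solvable all_field all_character.
From mathcomp Require Import zify ring.
Set Implicit Arguments. Unset Strict Implicit. Unset Printing Implicit Defensive.


Lemma sumb_card (T : finType) (P Q : pred T) :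
  \sum_(x | P x) ((Q x) : nat) = #|[set x | P x && Q x]|.
Proof.
rewrite -sum1_card big_mkcond [RHS]big_mkcond /=; apply: eq_bigr => x _.
by rewrite inE; case: (P x); case: (Q x).
Qed.

Lemma sumb_compl (T : finType) (P : pred T) :
  \sum_x ((P x) : nat) + \sum_x ((~~ P x) : nat) = #|T|.
Proof.
rewrite -big_split /= -sum1_card; apply: eq_bigr => x _; by case: (P x).
Qed.

Section Count.
Variable n : nat.

Lemma card_fix2 (k a : 'I_n) : k != a ->
  #|[set y : 'S_n | (y k == k) && (y a == a)]| = (n - 2)`!.
Proof.
move=> ka.
have -> : (n - 2 = #|~: [set k; a]|)%N.
  by have := cardsC [set k; a]; rewrite cards2 ka card_ord; lia.
rewrite -card_perm; apply: eq_card => y; rewrite !inE.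
apply/andP/subsetP => [[/eqP yk /eqP ya] i | H].
  rewrite !inE => yi; apply/negP => /orP [] /eqP Ei; move: yi; by rewrite Ei ?yk ?ya eqxx.
split; apply/negPn/negP => yi.
  by have := H k yi; rewrite !inE eqxx.
by have := H a yi; rewrite !inE eqxx orbT.
Qed.

Lemma card_fix1 (k : 'I_n) :
  #|[set y : 'S_n | y k == k]| = (n - 1)`!.
Proof.
have -> : (n - 1 = #|~: [set k]|)%N.
  by have := cardsC [set k]; rewrite cards1 card_ord; lia.
rewrite -card_perm; apply: eq_card => y; rewrite !inE.
apply/idP/subsetP => [/eqP yk i | H].
  rewrite !inE => yi; apply/negP => /eqP Ei; move: yi; by rewrite Ei yk eqxx.
apply/negPn/negP => yi.
by have := H k yi; rewrite !inE eqxx.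
Qed.

Lemma card_map2 (k a b c : 'I_n) : k != a -> b != c ->
  #|[set y : 'S_n | (y k == b) && (y a == c)]| = (n - 2)`!.
Proof.
move=> ka bc.
pose c1 := tperm k b a; pose s := (tperm k b * tperm c1 c)%g.
have c1b : c1 != b.
  have E := tpermL k b; rewrite /c1 -[X in _ != X]E (inj_eq perm_inj).
  by rewrite eq_sym.
have sk : s k = b by rewrite permM tpermL tpermD // eq_sym.
have sa : s a = c by rewrite permM (tpermL c1 c).
rewrite -(card_fix2 ka) -[RHS](card_rcoset _ s); apply: eq_card => y.
have E z w : (s^-1%g z == w) = (z == s w).
  by rewrite -(inj_eq (@perm_inj _ s)) permKV.
by rewrite mem_rcoset !inE !permM !E sk sa.
Qed.

Lemma card_map1 (k b : 'I_n) :
  #|[set y : 'S_n | y k == b]| = (n - 1)`!.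
Proof.
pose s := tperm k b.
have sk : s k = b by rewrite tpermL.
rewrite -(card_fix1 k) -[RHS](card_rcoset _ s); apply: eq_card => y.
have E z w : (s^-1%g z == w) = (z == s w).
  by rewrite -(inj_eq (@perm_inj _ s)) permKV.
by rewrite mem_rcoset !inE !permM !E sk.
Qed.

End Count.
Section Main.
Variable n : nat.
Variable g : 'S_n.

Definition fixc (x : 'S_n) := \sum_(k : 'I_n) ((x k == k) : nat).
Definition nfixc (x : 'S_n) := \sum_(k : 'I_n) ((x k != k) : nat).
Definition Fc (x : 'S_n) := \sum_(b : 'I_n) ((g (x b) == b) : nat).
Definition nFc (x : 'S_n) := \sum_(b : 'I_n) ((g (x b) != b) : nat).
Definition fg := \sum_(b : 'I_n) ((g b == b) : nat).

Lemma sumb_card' (T : finType) (Q : pred T) :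
  \sum_x ((Q x) : nat) = #|[set x | Q x]|.
Proof. by rewrite sumb_card; apply: eq_card => x; rewrite !inE. Qed.

Lemma inner (x : 'S_n) (k : 'I_n) :
  \sum_(y : 'S_n) ((y (x k) == g (x (y k))) : nat) =
  if x k == k then Fc x * (n - 1)`! else nFc x * (n - 2)`!.
Proof.
rewrite (partition_big (fun y : 'S_n => y k) predT) //=.
have step j : \sum_(y : 'S_n | true && (y k == j)) ((y (x k) == g (x (y k))) : nat)
   = #|[set y : 'S_n | (y k == j) && (y (x k) == g (x j))]|.
  rewrite (eq_bigr (fun y : 'S_n => (y (x k) == g (x j)) : nat)) => [|y /andP[_ /eqP -> //]].
  by rewrite sumb_card; apply: eq_card => y; rewrite !inE.
under eq_bigr => j _ do rewrite step.
case: (eqVneq (x k) k) => xk.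
  rewrite xk /Fc big_distrl /=; apply: eq_bigr => b _.
  case: (eqVneq (g (x b)) b) => e /=.
    by rewrite mul1n -(card_map1 k b); apply: eq_card => y; rewrite !inE e andbb.
  rewrite mul0n; apply/eqP; rewrite cards_eq0; apply/eqP/setP => y; rewrite !inE.
  apply/negbTE/negP => /andP [/eqP -> /eqP E].
  by rewrite -E eqxx in e.
rewrite /nFc (big_distrl ((n-2)`!)) /=; apply: eq_bigr => b _.
case: (eqVneq (g (x b)) b) => e /=.
  rewrite mul0n; apply/eqP; rewrite cards_eq0; apply/eqP/setP => y; rewrite !inE e.
  apply/negbTE/negP => /andP [/eqP yk /eqP ya].
  have : y (x k) = y k by rewrite ya yk.
  by move/perm_inj => E; rewrite E eqxx in xk.
by rewrite card_map2 ?mul1n // eq_sym.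
Qed.

Definition T3 := \sum_(x : 'S_n) \sum_(y : 'S_n) \sum_(k : 'I_n)
   ((y (x k) == g (x (y k))) : nat).

Lemma T3_eq : T3 = \sum_(x : 'S_n)
   (fixc x * Fc x * (n - 1)`! + nfixc x * nFc x * (n - 2)`!).
Proof.
apply: eq_bigr => x _; rewrite exchange_big /=.
under eq_bigr => k _ do rewrite inner.
rewrite /fixc /nfixc -!mulnA !big_distrl -big_split; apply: eq_bigr => k _ /=.
by case: (x k == k); rewrite /= ?mul1n ?mul0n ?addn0.
Qed.

Lemma fix_compl x : fixc x + nfixc x = n.
Proof. by rewrite /fixc /nfixc sumb_compl card_ord. Qed.

Lemma F_compl x : Fc x + nFc x = n.
Proof. by rewrite /Fc /nFc sumb_compl card_ord. Qed.

Lemma Eg (z w : 'I_n) : (g z == w) = (z == g^-1%g w).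
Proof. by rewrite -[RHS](inj_eq (@perm_inj _ g)) permKV. Qed.

Lemma S1 : \sum_(x : 'S_n) fixc x = n * (n - 1)`!.
Proof.
rewrite /fixc exchange_big /=.
under eq_bigr => k _ do rewrite sumb_card' card_fix1.
by rewrite sum_nat_const card_ord.
Qed.

Lemma S1' : \sum_(x : 'S_n) Fc x = n * (n - 1)`!.
Proof.
rewrite /Fc exchange_big /=.
under eq_bigr => k _.
  rewrite (eq_bigr (fun x : 'S_n => (x k == g^-1%g k) : nat)); last by move=> x _; rewrite Eg.
  rewrite sumb_card' card_map1.
  over.
by rewrite sum_nat_const card_ord.
Qed.

End Main.
Section Main2.
Variable n : nat.
Variable g : 'S_n.

Lemma S2 : (2 <= n)%N -> \sum_(x : 'S_n) fixc x * Fc g x =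
   fg g * (n-1)`! + (n*(n-2) + fg g) * (n-2)`!.
Proof.
move=> n2.
have E1 : \sum_(x : 'S_n) fixc x * Fc g x = \sum_(k : 'I_n) \sum_(b : 'I_n)
   #|[set x : 'S_n | (x k == k) && (x b == g^-1%g b)]|.
  rewrite (eq_bigr (fun x : 'S_n => \sum_(k : 'I_n) \sum_(b : 'I_n)
     ((x k == k) && (g (x b) == b) : nat))); last first.
    move=> x _; rewrite /fixc /Fc big_distrl; apply: eq_bigr => k _.
    by rewrite big_distrr; apply: eq_bigr => b _; rewrite /= mulnb.
  rewrite exchange_big; apply: eq_bigr => k _ /=; rewrite exchange_big.
  apply: eq_bigr => b _ /=.
  by rewrite sumb_card'; apply: eq_card => x; rewrite !inE (Eg g).
have E2 (k b : 'I_n) : #|[set x : 'S_n | (x k == k) && (x b == g^-1%g b)]| =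
   (k == b) * (g b == b) * (n-1)`! + ((k != b) && (k != g^-1%g b)) * (n-2)`!.
  case: (eqVneq k b) => [->|kb] /=.
    rewrite mul0n addn0 mul1n.
    case: (eqVneq (g b) b) => e.
      have e' : g^-1%g b = b by apply/eqP; rewrite eq_sym -(Eg g) e.
      rewrite mul1n -(card_fix1 b); apply: eq_card => x; by rewrite !inE e' andbb.
    rewrite mul0n; apply/eqP; rewrite cards_eq0; apply/eqP/setP => x; rewrite !inE.
    apply/negbTE/negP => /andP [/eqP xb /eqP xb'].
    by move: e; rewrite (Eg g) -xb' xb eqxx.
  rewrite mul0n add0n.
  case: (eqVneq k (g^-1%g b)) => e /=.
    rewrite mul0n; apply/eqP; rewrite cards_eq0; apply/eqP/setP => x; rewrite !inE.
    apply/negbTE/negP => /andP [/eqP xk /eqP xb].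
    have : x b = x k by rewrite xk xb e.
    by move/perm_inj => E; rewrite E eqxx in kb.
  by rewrite mul1n card_map2.
rewrite E1.
under eq_bigr => k _ do (under eq_bigr => b _ do rewrite E2; rewrite big_split /=).
rewrite big_split /=; congr (_ + _).
  rewrite /fg big_distrl; apply: eq_bigr => k _ /=.
  rewrite (bigD1 k) //= eqxx mul1n big1 ?addn0 // => b.
  by rewrite eq_sym => /negbTE ->.
under eq_bigr => k _ do rewrite -big_distrl.
rewrite -big_distrl /=; congr (_ * _).
have -> : (n * (n-2) + fg g = \sum_(b : 'I_n) ((n-2) + (g b == b)))%N.
  by rewrite big_split /= sum_nat_const card_ord /fg.
rewrite exchange_big /=.
apply: eq_bigr => b _.
rewrite sumb_card'.
have -> : #|[set k : 'I_n | (k != b) && (k != g^-1%g b)]| = #|~: [set b; g^-1%g b]|.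
  by apply: eq_card => k; rewrite !inE negb_or.
have := cardsC [set b; g^-1%g b]; rewrite cards2 card_ord (Eg g).
case: (b == g^-1%g b) => /=; lia.
Qed.

Lemma NT : (n * #|[set xy : 'S_n * 'S_n | [~ xy.1, xy.2]%g == g]| <= T3 g)%N.
Proof.
rewrite -sumb_card' -(pair_big xpredT xpredT (fun x y : 'S_n => ([~ x, y]%g == g) : nat)) /=.
rewrite big_distrr /=.
apply: leq_sum => x _; rewrite big_distrr; apply: leq_sum => y _.
case: eqP => [E|_] /=; last by rewrite muln0.
rewrite muln1 (eq_bigr (fun _ => 1%N)); first by rewrite sum_nat_const card_ord muln1.
move=> k _; rewrite -E.
by rewrite /commg /conjg !permM !permK eqxx.
Qed.

End Main2.
Lemma T3_val (n : nat) (g : 'S_n) : (2 <= n)%N ->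
  T3 g = (n * n * ((n-2)`! * (n-2)`!) * (fg g + n * (n-2)))%N.
Proof.
move=> n2.
have pw x : (nfixc x * nFc g x + n * fixc x + n * Fc g x = n * n + fixc x * Fc g x)%N.
  move: (fix_compl x) (F_compl g x); nia.
have hX : (\sum_(x : 'S_n) (nfixc x * nFc g x + n * fixc x + n * Fc g x)
   = \sum_(x : 'S_n) (n * n + fixc x * Fc g x))%N by apply: eq_bigr => x _; exact: pw.
rewrite !big_split /= -!big_distrr /= sum_nat_const card_Sn S1 S1' (S2 g n2) in hX.
rewrite T3_eq big_split /= -!big_distrl /= (S2 g n2).
clear pw; move: hX; set X := \sum_(i : 'S_n) _.
case: n g n2 X => [|[|m]] g //= _ X.
have e1 : ((m.+2 - 1)`! = m.+1 * m`!)%N by rewrite subn1 /= factS.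
have e2 : (m.+2 - 2 = m)%N by lia.
rewrite e1 e2 !factS => H.
have H2 := congr1 (fun z => m`! * z)%N H. simpl in H2.
set m2 := m`! in H H2 *.
nia.
Qed.
Import GRing.Theory Num.Theory.
Local Open Scope ring_scope.

Lemma comm_bound (n : nat) (g : 'S_n) : (2 <= n)%N ->
  comm_prob [set: 'S_n]%G g <=
    n%:R^-1 * (1 + ((fg g)%:R - 1) / ((n.-1)%:R ^+ 2)) :> algC.
Proof.
move=> n2.
rewrite /comm_prob.
set N := #|_|.
have -> : N = #|[set xy : 'S_n * 'S_n | [~ xy.1, xy.2]%g == g]|.
  by apply: eq_card => xy; rewrite !inE.
have hN := NT g; rewrite (T3_val g n2) in hN.
clear N; set N := #|_| in hN *.
rewrite cardsT card_Sn.
case: n g n2 N hN => [|[|m]] g //= _ N hN.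
have e2 : (m.+2 - 2 = m)%N by lia.
rewrite e2 in hN.
have hN' : (N <= m.+2 * (m`! * m`!) * (fg g + m.+2 * m))%N.
  rewrite -(@leq_pmul2l m.+2) //; by apply: leq_trans hN _; rewrite !mulnA leqnn.
rewrite !factS.
have hf : m`!%:R != 0 :> algC by rewrite pnatr_eq0 -lt0n fact_gt0.
have -> : (m.+2)%:R^-1 * (1 + ((fg g)%:R - 1) / (m.+1)%:R ^+ 2) =
   (m.+2 * (m`! * m`!) * (fg g + m.+2 * m))%:R / ((m.+2 * (m.+1 * m`!)) ^ 2)%:R :> algC.
  have e3 : m.+2%:R = m%:R + 2 :> algC by rewrite -addn2 natrD.
  have e4 : m.+1%:R = m%:R + 1 :> algC by rewrite -addn1 natrD.
  have h2 : m%:R + 2 != 0 :> algC by rewrite -e3 pnatr_eq0.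
  have h1 : m%:R + 1 != 0 :> algC by rewrite -e4 pnatr_eq0.
  rewrite !natrM !natrD ?natrX !natrM e3 e4.
  by field; rewrite hf h1 h2.
apply: ler_wpM2r; first by rewrite invr_ge0 ler0n.
by rewrite ler_nat.
Qed.

Theorem corollary4 (n : nat) (chi : 'CF([set: 'S_n]))
  (hn : (2 <= n)%N)
  (hirr : chi \in irr [set: 'S_n])
  (hdim : chi 1%g = (n.-1)%:R)
  (hperm : forall g : 'S_n, perm_char g = 1 + chi g) :
  (forall g : 'S_n,
     comm_prob [set: 'S_n]%G g
       <= n%:R^-1 * (1 + chi g / ((n.-1)%:R ^+ 2)))
  /\ comm_prob_grp [set: 'S_n]%G <= (n.-1)%:R^-1.
Proof.
have hf g : perm_char g = (fg g)%:R by rewrite /perm_char /fg sumb_card'.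
have hchi g : chi g = (fg g)%:R - 1 by rewrite -hf hperm [1 + _]addrC addrK.
have P1 g : comm_prob [set: 'S_n]%G g <= n%:R^-1 * (1 + chi g / ((n.-1)%:R ^+ 2)).
  by rewrite hchi; exact: comm_bound.
split => //.
rewrite /comm_prob_grp; apply: Order.POrderTheory.le_trans (P1 1%g) _; rewrite hdim.
case: n chi hn hirr hdim hperm hf hchi P1 => [|[|m]] //= chi _ _ _ _ _ _ _.
have e4 : m.+1%:R = m%:R + 1 :> algC by rewrite -addn1 natrD.
have e3 : m.+2%:R = m%:R + 2 :> algC by rewrite -addn2 natrD.
have h2 : m%:R + 2 != 0 :> algC by rewrite -e3 pnatr_eq0.
have h1 : m%:R + 1 != 0 :> algC by rewrite -e4 pnatr_eq0.
rewrite e3 e4.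
have -> : (m%:R + 2)^-1 * (1 + (m%:R + 1) / (m%:R + 1) ^+ 2) = (m%:R + 1)^-1 :> algC.
  by field; rewrite h1 h2.
exact: Order.POrderTheory.lexx.
Qed.
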